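(* Let $G = H\times N$ be a finite group that is the direct product of subgroups $H$ and $N$, and identify $G/N$ with $H$. Let $i\ge 2$. Then for every $\bar f\in\hat H^{-i}(G,\mathbb{Z})$ and every $\bar\psi\in\hat H^{i}(H,\mathbb{Z})$, $$\bar f\cup \mathrm{Inf}^G_H(\bar\psi) = \mathrm{Cor}^G_H\big(\mathrm{Rsd}^G_H(\bar f)\cup\bar\psi\big)\quad\text{in } \hat H^0(G,\mathbb{Z}),$$ where $\cup$ denotes the cup products $\hat H^{-i}(G,\mathbb{Z})\times\hat H^{i}(G,\mathbb{Z})\to\hat H^0(G,\mathbb{Z})$ and $\hat H^{-i}(H,\mathbb{Z})\times\hat H^{i}(H,\mathbb{Z})\to\hat H^0(H,\mathbb{Z})$, $\mathrm{Inf}^G_H\colon \hat H^i(H,\mathbb{Z})\to\hat H^i(G,\mathbb{Z})$ is inflation via $G\to G/N=H$, and $\mathrm{Cor}^G_H\colon\hat H^0(H,\mathbb{Z})\to\hat H^0(G,\mathbb{Z})$ is corestriction.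
   Context: $\mathbb{Z}$ carries trivial action and $\hat H^j$ denotes Tate cohomology. Tate cohomology of a finite group $G$ with coefficients in $A$ is computed from the complete standard complex $X$: for $j\ge0$, $X_j=\mathbb{Z}[G^{j+1}]$ (diagonal action, usual homogeneous differential); for $j\ge1$, $X_{-j}=\mathrm{Hom}_{\mathbb{Z}}(X_{j-1},\mathbb{Z})$, a free $\mathbb{Z}$-module with basis $(s_1^*,\dots,s_j^* )$, $s_k\in G$, the dual basis element of $(s_1,\dots,s_j)$, with action $g(s_1^*,\dots,s_j^* ) = ((gs_1)^*,\dots,(gs_j)^* )$; and $\hat H^j(G,A)=H^j(\mathrm{Hom}_G(X,A))$. Thus a class in $\hat H^{-i}(G,\mathbb{Z})$ is represented by a $G$-invariant cocycle $f$ on tuples $(s_1^*,\dots,s_i^* )$, $s_k\in G$. The residuation map $\mathrm{Rsd}^G_H\colon \hat H^{-i}(G,\mathbb{Z})\to \hat H^{-i}(H,\mathbb{Z})$ (for $i\ge2$, $G=H\times N$, $G/N\cong H$) is induced on cochains by $$\mathrm{Rsd}(f)(h_1^*,h_2^*,\dots,h_i^* ) = \sum_{n_2,\dots,n_i\in N} f\big(h_1^*,(h_2n_2)^*,\dots,(h_in_i)^*\big),\qquad h_k\in H.$$ (In general, for a normal subgroup $M\lhd G$, residuation $\hat H^{-i}(G,A)\to\hat H^{-i}(G/M,A/I_MA)$ is induced by $(\alpha^*,\alpha_2^*,\dots,\alpha_i^* )\mapsto \sum_{g_kM=\alpha_k,\,k\ge2} f(g^*,g_2^*,\dots,g_i^*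 )+I_MA$ with $g$ any single element of $\alpha$, where $I_M$ is the augmentation ideal of $\mathbb{Z}[M]$.) *)

(* Defs.v *)
(* Cochain-level description of the complete standard complex
   computing Tate cohomology with trivial Z coefficients. *)
From HB Require Import structures.
From mathcomp Require Import all_boot all_order all_algebra all_fingroup gproduct.
Set Implicit Arguments. Unset Strict Implicit. Unset Printing Implicit Defensive.
Import GRing.Theory Num.Theory.
Local Open Scope ring_scope.
Local Open Scope group_scope.

Section TateCochains.
Variable gT : finGroupType.
Implicit Types (A : {set gT}) (s : seq gT) (c : seq gT -> int).

(* a cochain of degree j is a Z-valued function on the basis of X_j:
   for j = i >= 0 the tuples (s_0,...,s_i) in G^{i+1};
   for j = -i < 0 the dual basis elements (s_1^#,...,s_i^#), s_k in G,
   encoded by the sequence [:: s_1; ...; s_i].  Values on sequences of the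
   wrong length or not in G are irrelevant. *)

Definition inG A s := all (fun x => x \in A) s.

Definition sumT A k (F : seq gT -> int) : int :=
  (\sum_(t : k.-tuple gT | inG A t) F t)%R.

(* G-equivariance (Hom_G) of a cochain with values in Z (trivial action):
   the action on both X_i and X_{-i} is diagonal left multiplication. *)
Definition g_invariant A k c :=
  forall g s, g \in A -> size s = k -> inG A s -> c (map (mulg g) s) = c s.

Definition drop_nth j s := take j s ++ drop j.+1 s.
Definition ins_nth j (x : gT) s := take j s ++ x :: drop j s.

Definition pos_cocycle A i c :=
  forall s, size s = i.+2 -> inG A s ->
    (\sum_(j < i.+2) (-1) ^+ j * c (drop_nth j s))%R = 0%R.

(* cocycle condition in degree -i, i >= 2: c o d = 0 where
   d : X_{-(i-1)} -> X_{-i} is the dual of d : X_{i-1} -> X_{i-2}, i.e.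
   d(s_1^#,...,s_{i-1}^#) = sum_{j} (-1)^j sum_{x in G} (..., x^# at slot j, ...). *)
Definition neg_cocycle A i c :=
  forall s, size s = i.-1 -> inG A s ->
    (\sum_(j < i) (-1) ^+ j * (\sum_(x in A) c (ins_nth j x s)))%R = 0%R.

(* Cup product H^{-i} x H^{i} -> H^0 via the diagonal approximation
   X_0 -> X_{-i} (x) X_i,  x_0 |-> sum_{t} (t_1^#,...,t_i^#) (x) (t_i,...,t_1,x_0)
   (Neukirch-Schmidt-Wingberg, Ch. I, Sect. 4). *)
Definition cup A i (f psi : seq gT -> int) (x0 : gT) : int :=
  sumT A i (fun t => f t * psi (rcons (rev t) x0))%R.

(* Inflation along G -> G/N = H, g = h n |-> h, for G = H x N. *)
Definition infl (H N : {set gT}) (psi : seq gT -> int) : seq gT -> int :=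
  fun s => psi (map (divgr H N) s).

(* Residuation Rsd^G_H on degree -i cochains (trivial coefficients):
   Rsd(f)(h_1^#,...,h_i^#) = sum_{n_2..n_i in N} f(h_1^#,(h_2 n_2)^#,...,(h_i n_i)^#). *)
Definition rsd (N : {set gT}) i (f : seq gT -> int) : seq gT -> int :=
  fun s => sumT N i.-1
    (fun n => f (head 1 s :: [seq p.1 * p.2 | p <- zip (behead s) n])).

(* Corestriction in degree 0: induced by the norm map
   N_{G/H} : Z^H -> Z^G, a |-> sum_{gH in G/H} g.a  (trivial action). *)
Definition cor0 (G H : {set gT}) (a : int) : int :=
  (\sum_(C in rcosets H G) a)%R.

End TateCochains.

(* Main.v *)
Require Import Defs.
From HB Require Import structures.
From mathcomp Require Import all_boot all_order all_algebra all_fingroup gproduct.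
Import GRing.Theory Num.Theory.
Set Implicit Arguments. Unset Strict Implicit. Unset Printing Implicit Defensive.

Section Helpers.
Variable gT : finGroupType.
Local Open Scope group_scope.

Definition zm (h n : seq gT) := [seq p.1 * p.2 | p <- zip h n].

Lemma sumT0 (A : {set gT}) F : sumT A 0 F = F [::].
Proof.
rewrite /sumT (big_pred1 [tuple]) // => t.
by rewrite tuple0 /= eqxx.
Qed.

Lemma sumTS (A : {set gT}) k F :
  sumT A k.+1 F = (\sum_(x in A) sumT A k (fun t => F (x :: t)))%R.
Proof.
rewrite /sumT (reindex (fun p : gT * k.-tuple gT => [tuple of p.1 :: p.2])) /=.
  by rewrite -(pair_big_dep (fun x => x \in A) (fun _ (t : k.-tuple gT) => inG A t)
       (fun x (t : k.-tuple gT) => F (x :: val t))).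
exists (fun t : k.+1.-tuple gT => (thead t, [tuple of behead t])).
  by move=> [x t] _ /=; congr (_, _); apply: val_inj.
by move=> t _; rewrite /= [t in RHS]tuple_eta.
Qed.

Lemma eq_sumT (A : {set gT}) k F F' :
  (forall t, size t = k -> inG A t -> F t = F' t) -> sumT A k F = sumT A k F'.
Proof. by move=> E; apply: eq_bigr => t Ht; apply: E => //; rewrite size_tuple. Qed.

Lemma sumT_exch (A B : {set gT}) k (F : seq gT -> gT -> int) :
  sumT A k (fun t => \sum_(x in B) F t x)%R = (\sum_(x in B) sumT A k (fun t => F t x))%R.
Proof. by rewrite /sumT exchange_big. Qed.

Lemma sumT_shift (A : {group gT}) k a F : a \in A ->
  sumT A k (fun t => F (map (mulg a) t)) = sumT A k F.
Proof.
move=> aA; elim: k F => [|k IH] F; first by rewrite !sumT0.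
rewrite !sumTS /=.
under eq_bigr => x _ do rewrite (IH (fun t => F (a * x :: t))).
rewrite [RHS](reindex (mulg a)) /=.
  by apply: eq_bigl => x; rewrite groupMl.
by exists (mulg a^-1) => x _; rewrite ?mulKg ?mulKVg.
Qed.

End Helpers.

Section Dprod.
Variables (gT : finGroupType) (G H N : {group gT}).
Hypothesis hGHN : (H \x N)%g = G.
Local Open Scope group_scope.

Lemma HG : H \subset G.
Proof. by case/dprodP: hGHN => _ <- _ _; apply: mulG_subl. Qed.
Lemma NG : N \subset G.
Proof. by case/dprodP: hGHN => _ <- _ _; apply: mulG_subr. Qed.
Lemma tiHN : H :&: N = 1.
Proof. by case/dprodP: hGHN. Qed.
Lemma commHN h n : h \in H -> n \in N -> n * h = h * n.
Proof.
case/dprodP: hGHN => _ _ cNH _ hH nN.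
have /centP := subsetP cNH n nN; by move/(_ h hH).
Qed.

Lemma sum_dprod (F : gT -> int) :
  (\sum_(x in G) F x = \sum_(h in H) \sum_(n in N) F (h * n)%g)%R.
Proof.
rewrite (pair_big_dep (fun h => h \in H) (fun _ n => n \in N) (fun h n => F (h * n))).
rewrite (reindex (fun x => (divgr H N x, remgr H N x))) /=.
  apply: eq_big => x; last by move=> _; rewrite -(divgr_eq H N).
  case/dprodP: hGHN => _ <- _ _.
  apply/idP/idP.
    by move=> xG; rewrite mem_divgr ?mem_remgr.
  by case/andP=> a b; rewrite [x](divgr_eq H N) mem_mulg.
exists (fun p => p.1 * p.2).
  by move=> x _ /=; rewrite -(divgr_eq H N).
move=> [h n] /andP[/= hH nN].
by rewrite /= divgrMid ?remgrMid // tiHN.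
Qed.

Lemma inG_zm h n : inG H h -> inG N n -> inG G (zm h n).
Proof.
elim: h n => [|x h IH] [|y n] //= /andP[xH hH] /andP[yN nN].
rewrite IH // andbT groupM //; first exact: subsetP HG _ xH.
exact: subsetP NG _ yN.
Qed.

Lemma size_zm (h n : seq gT) : size h = size n -> size (zm h n) = size h.
Proof. by move=> E; rewrite size_map size_zip E minnn. Qed.

Lemma divgr_zm h n : size h = size n -> inG H h -> inG N n ->
  map (divgr H N) (zm h n) = h.
Proof.
elim: h n => [|x h IH] [|y n] //= [E] /andP[xH hH] /andP[yN nN].
by rewrite divgrMid ?tiHN // IH.
Qed.

Lemma shift_zm a h n : a \in N -> inG H h ->
  map (mulg a) (zm h n) = zm h (map (mulg a) n).
Proof.
move=> aN; elim: h n => [|x h IH] [|y n] //= /andP[xH hH].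
by rewrite IH //; congr (_ :: _); rewrite (mulgA a x y) (commHN xH aN) -mulgA.
Qed.

Lemma sumT_zm k F :
  sumT G k F = sumT H k (fun h => sumT N k (fun n => F (zm h n))).
Proof.
elim: k F => [|k IH] F; first by rewrite !sumT0.
rewrite sumTS.
under eq_bigr => x _ do rewrite (IH (fun t => F (x :: t))).
rewrite (sum_dprod (fun x => sumT H k (fun h => sumT N k (fun n => F (x :: zm h n))))).
rewrite sumTS; apply: eq_bigr => h1 _.
under [RHS]eq_sumT => t _ _ do rewrite sumTS.
by rewrite sumT_exch.
Qed.

Lemma cardN : #|rcosets H G| = #|N|.
Proof.
have := Lagrange HG; rewrite -(dprod_card hGHN) => /eqP.
by rewrite eqn_mul2l (negbTE (lt0n_neq0 (cardG_gt0 H))) /= => /eqP.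
Qed.

End Dprod.

Lemma sumT_mulrn (gT : finGroupType) (A : {set gT}) k F m :
  (sumT A k F *+ m = sumT A k (fun t => F t *+ m))%R.
Proof. by rewrite /sumT sumrMnl. Qed.

Lemma sumT_mulr (gT : finGroupType) (A : {set gT}) k F c :
  (sumT A k (fun t => F t * c) = sumT A k F * c)%R.
Proof. by rewrite /sumT mulr_suml. Qed.

Theorem lemma5 (gT : finGroupType) (G H N : {group gT}) (i : nat)
  (hGHN : (H \x N)%g = G) (hi : (2 <= i)%N)
  (f psi : seq gT -> int)
  (f_inv : g_invariant G i f) (f_coc : neg_cocycle G i f)
  (psi_inv : g_invariant H i.+1 psi) (psi_coc : pos_cocycle H i psi) :
  (cup G i f (infl H N psi) 1%g
     = cor0 G H (cup H i (rsd N i f) psi 1%g) %[mod #|G|%:Z])%Z.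
Proof.
suff -> : cup G i f (infl H N psi) 1%g = cor0 G H (cup H i (rsd N i f) psi 1%g) by [].
rewrite /cup (sumT_zm hGHN) /cor0 sumr_const (cardN hGHN) sumT_mulrn.
apply: eq_sumT => h sh hH.
have div1 : divgr H N 1 = 1%g.
  by rewrite -{1}(mulg1 1%g) divgrMid ?(tiHN hGHN).
under eq_sumT => n sn nN do
  rewrite /infl map_rcons map_rev (divgr_zm hGHN) ?sh // div1.
rewrite sumT_mulr -mulrnAl; congr (_ * _)%R.
clear f_coc psi_inv psi_coc.
move: hi f_inv sh; case: i => [|k] // _ f_inv sh.
case: h sh hH => [|h1 h'] //= [sh'] /andP[h1H h'H].
rewrite /rsd /= sumTS -sumr_const; apply: eq_bigr => n1 n1N.
rewrite -(@sumT_shift _ N k (n1^-1)%g (fun n => f (h1 :: zm h' n)) (groupVr n1N)).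
apply: eq_sumT => n sn nN.
have HG := HG hGHN; have NG := NG hGHN.
rewrite -(shift_zm hGHN _ (groupVr n1N)) //.
rewrite -[LHS](f_inv (n1^-1)%g); last first.
- by apply: (inG_zm hGHN); rewrite /= ?h1H ?n1N.
- by rewrite (size_zm (h:=h1::h')) //= ?sn ?sh'.
- by rewrite groupV (subsetP NG).
congr f; rewrite /= (mulgA (n1^-1)%g h1 n1) (commHN hGHN h1H (groupVr n1N)) -mulgA mulVg mulg1.
done.
Qed.
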